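(* Let $C$ be an $(n,k)$-code with generator matrix $G$ and let $\ell\ge2$. (a) $C$ is $\operatorname{rMDS}_0(\ell)$ if and only if $C$ is $\operatorname{MDS}(\ell)$. (b) If $C$ is $\operatorname{rMDS}_d(\ell)$, then $C$ is $\operatorname{rMDS}_{d'}(\ell)$ for all $d'\in\{d+1,\dots,k\}$. (c) If $C$ is $\operatorname{rMDS}_d(\ell)$, then $C$ is $\operatorname{rMDS}_d(\ell')$ for all $\ell'\in\{2,\dots,\ell-1\}$. (d) $C$ is $\operatorname{rMDS}_d(2)$ if and only if every $k-d$ columns of $G$ are linearly independent.
   Context: For a matrix $V$ and $A\subseteq[n]$, $V|_A$ denotes the columns in $A$ and $V_A$ their span. A generic $m\times n$ matrix $W$ has independent indeterminate entries. A code with $k\times n$ generator matrix $V$ is $\operatorname{MDS}(\ell)$ if for all $A_1,\dots,A_\ell\subseteq[n]$, $\dim(V_{A_1}\cap\dots\cap V_{A_\ell})=\dim(W_{A_1}\cap\dots\cap W_{A_\ell})$ for generic $k\times n$ $W$. $\mathcal G_{A_1,\dots,A_\ell}[V]$ is the block matrix whose $i$-th block row has $I_k$ in the first block column and $V|_{A_i}$ in block column $i+1$ (zeros elsewhere). $C$ is $\operatorname{rMDS}_d(\ell)$ ($0\le d\le k$) if $\mathcal G_{A_1,\dots,A_\ell}[G]$ has full column rank whenever $\mathcal G_{A_1,\dots,A_\ell}[W]$ does, for generic $(k-d)\times n$ $W$. *)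

(* Defs.v *)
From HB Require Import structures.
From mathcomp Require Import all_boot all_order all_algebra.
From mathcomp Require Import fraction.
From mathcomp Require Import mpoly.
Set Implicit Arguments. Unset Strict Implicit. Unset Printing Implicit Defensive.
Import GRing.Theory.
Local Open Scope ring_scope.

(* V|_A : the submatrix of V consisting of the columns indexed by A
   (in increasing order of index). *)
Definition colsub_set (R : Type) (m n : nat) (A : {set 'I_n}) (V : 'M[R]_(m, n))
  : 'M[R]_(m, #|A|) :=
  colsub (fun j : 'I_#|A| => enum_val j) V.

(* V_A : the column span of V|_A, as a (square) row-space matrix of
   column vectors in R^m. *)
Definition colspan (R : fieldType) (m n : nat) (A : {set 'I_n}) (V : 'M[R]_(m, n))
  : 'M[R]_m := <<(colsub_set A V)^T>>%MS.

Definition dim_cap (R : fieldType) (m n l : nat) (A : 'I_l -> {set 'I_n})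
  (V : 'M[R]_(m, n)) : nat :=
  \rank (\bigcap_(i < l) colspan (A i) V)%MS.

(* Generic m x n matrix: independent indeterminate entries, viewed in the
   field of rational functions F(x_{ij}). *)
Definition genfield (F : fieldType) (m n : nat) : fieldType :=
  {fraction {mpoly F[m * n]}}.

Definition generic (F : fieldType) (m n : nat) : 'M[genfield F m n]_(m, n) :=
  \matrix_(i < m, j < n) tofrac ('X_(mxvec_index i j) : {mpoly F[m * n]}).

Definition Gblock (R : fieldType) (m n l : nat) (A : 'I_l -> {set 'I_n})
  (V : 'M[R]_(m, n)) :=
  row_mx (\mxcol_(i < l) (1%:M : 'M[R]_m))
         (\mxblock_(i < l, j < l)
            (if i == j then colsub_set (A j) V else 0 : 'M[R]_(m, #|A j|))).

Definition full_col_rank (R : fieldType) (p q : nat) (M : 'M[R]_(p, q)) : bool :=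
  \rank M == q.

Definition MDS (F : fieldType) (k n l : nat) (V : 'M[F]_(k, n)) : Prop :=
  forall A : 'I_l -> {set 'I_n},
    dim_cap A V = dim_cap A (generic F k n).

Definition rMDS (F : fieldType) (k n : nat) (d l : nat) (G : 'M[F]_(k, n)) : Prop :=
  forall A : 'I_l -> {set 'I_n},
    full_col_rank (Gblock A (generic F (k - d) n)) ->
    full_col_rank (Gblock A G).

(* Main.v *)
Require Import Defs.
From HB Require Import structures.
From mathcomp Require Import all_boot all_order all_algebra.
From mathcomp Require Import fraction mpoly zify.
Local Open Scope ring_scope.

Module Aux.
Set Implicit Arguments. Unset Strict Implicit. Unset Printing Implicit Defensive.
Import GRing.Theory.


Section Lin.
Variable F : fieldType.
Variables m l : nat.

Definition Pm (i : 'I_l) : 'M[F]_(m, \sum_(j < l) m) :=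
  \mxrow_j (if j == i then 1%:M else 0 : 'M[F]_(m, m)).
Definition Dl : 'M[F]_(m, \sum_(j < l) m) := \mxrow_(j < l) (1%:M : 'M[F]_m).

Lemma PmPmT i j : Pm i *m (Pm j)^T = if i == j then 1%:M else 0.
Proof.
rewrite /Pm tr_mxrow mul_mxrow_mxcol (bigD1 i) //= big1 ?addr0 => [|k /negPf ->]; last by rewrite mul0mx.
by rewrite eqxx mul1mx; case: eqP => _; rewrite ?trmx1 ?trmx0.
Qed.

Lemma DlPmT i : Dl *m (Pm i)^T = 1%:M.
Proof.
rewrite /Dl /Pm tr_mxrow mul_mxrow_mxcol (bigD1 i) //= big1 ?addr0 => [|k /negPf ->]; last by rewrite trmx0 mulmx0.
by rewrite eqxx trmx1 mulmx1.
Qed.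

Lemma PmT_sum r (M : 'M[F]_(r, \sum_(j < l) m)) : M = \sum_i (M *m (Pm i)^T) *m Pm i.
Proof.
rewrite -{1}(submxrowK M).
have E i : M *m (Pm i)^T = submxrow M i.
  rewrite -{1}(submxrowK M) /Pm tr_mxrow mul_mxrow_mxcol (bigD1 i) //= big1 ?addr0 => [|k /negPf ->]; last by rewrite trmx0 mulmx0.
  by rewrite eqxx trmx1 mulmx1.
have E2 i : M *m (Pm i)^T *m Pm i = \mxrow_j (if j == i then submxrow M i else 0).
  by rewrite E /Pm mul_mxrow; apply: eq_mxrow => j; case: eqP; rewrite ?mulmx1 ?mulmx0.
rewrite (eq_bigr _ (fun i _ => E2 i)) -mxrow_sum; apply: eq_mxrow => j.
rewrite (bigD1 j) //= big1 ?addr0 => [|k /negPf]; first by rewrite eqxx.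
by rewrite eq_sym => ->.
Qed.


Lemma mxcol_eqmx (p N : nat) (p_ : 'I_p -> nat) (Y : forall i, 'M[F]_(p_ i, N)) :
  (\mxcol_i Y i :=: \sum_i <<Y i>>)%MS.
Proof.
apply/eqmxP/andP; split.
  apply/row_subP => s; rewrite row_mxcol.
  apply: (sumsmx_sup (tagnat.sig1 s)) => //; rewrite genmxE; exact: row_sub.
apply/sumsmx_subP => i _; rewrite genmxE -(mxcolK Y i) /submxcol.
exact: rowsub_sub.
Qed.

Variable n : nat.
Definition Xm (V : 'M[F]_(m, n)) (S : {set 'I_n}) := (colsub_set S V)^T.
Definition Bsum (V : 'M[F]_(m, n)) (A : 'I_l -> {set 'I_n}) :=
  (\sum_i <<Xm V (A i) *m Pm i>>)%MS.

Lemma rank_Gblock (V : 'M[F]_(m, n)) (A : 'I_l -> {set 'I_n}) :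
  \rank (Gblock A V) = \rank (Dl + Bsum V A)%MS.
Proof.
rewrite -mxrank_tr /Gblock tr_row_mx tr_mxcol tr_mxblock mxblockEv -addsmxE.
apply/eqmx_rank/eqmxP; apply: adds_eqmx.
  have -> : \mxrow_(i < l) (1%:M : 'M[F]_m)^T = Dl by apply: eq_mxrow => i; rewrite trmx1.
  exact: eqmx_refl.
apply: eqmx_trans (mxcol_eqmx _) _; apply: eqmx_sums => i _.
apply/eqmxP; rewrite !genmxE /Xm /Pm mul_mxrow; apply/eqmxP.
have -> : \mxrow_j (if j == i then colsub_set (A i) V else 0)^T =
   \mxrow_j ((colsub_set (A i) V)^T *m (if j == i then 1%:M else 0 : 'M[F]_m)).
  by apply: eq_mxrow => j; case: eqP; rewrite ?mulmx1 ?mulmx0 ?trmx0.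
exact: eqmx_refl.
Qed.

Lemma memB_l (P : pred 'I_l) (p_ : 'I_l -> nat) (X : forall i, 'M[F]_(p_ i, m)) r
   (Y : 'M[F]_(r, \sum_(j < l) m)) :
  (Y <= \sum_(j | P j) <<X j *m Pm j>>)%MS ->
  forall i, (Y *m (Pm i)^T <= X i)%MS /\ (~~ P i -> Y *m (Pm i)^T = 0).
Proof.
move=> /sub_sumsmxP [u ->] i; rewrite mulmx_suml.
have T j : exists D, <<X j *m Pm j>>%MS = D *m (X j *m Pm j).
  by apply/submxP; rewrite genmxE.
have T0 j : j != i -> u j *m <<X j *m Pm j>>%MS *m (Pm i)^T = 0.
  move=> ne; have [D ->] := T j.
  by rewrite -!mulmxA PmPmT (negPf ne) !mulmx0.
split; last first.
  by move=> nPi; apply: big1 => j Pj; apply: T0; apply: contraNneq nPi => <-.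
apply: summx_sub => j _; case: (eqVneq j i) => [<-|ne]; last by rewrite T0 ?sub0mx.
have [D ->] := T j; rewrite -!mulmxA PmPmT eqxx mulmx1 mulmxA; exact: submxMl.
Qed.

Lemma memB_r (P : pred 'I_l) (p_ : 'I_l -> nat) (X : forall i, 'M[F]_(p_ i, m)) r
   (Y : 'M[F]_(r, \sum_(j < l) m)) :
  (forall i, P i -> (Y *m (Pm i)^T <= X i)%MS) -> (forall i, ~~ P i -> Y *m (Pm i)^T = 0) ->
  (Y <= \sum_(j | P j) <<X j *m Pm j>>)%MS.
Proof.
move=> H1 H2; rewrite (PmT_sum Y); apply: summx_sub => i _.
case Pi: (P i); last by rewrite H2 ?Pi // mul0mx sub0mx.
apply: (sumsmx_sup i) => //; rewrite genmxE; exact: submxMr (H1 i Pi).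
Qed.


Lemma rank_Pm i : \rank (Pm i) = m.
Proof.
apply/eqP; rewrite eqn_leq rank_leq_row /=.
have := PmPmT i i; rewrite eqxx => E.
by rewrite -{1}(mxrank1 F m) -E mxrankM_maxl.
Qed.

Lemma row_free_Pm i : row_free (Pm i).
Proof. by rewrite /row_free rank_Pm. Qed.

Lemma rank_Dl : (0 < l)%N -> \rank Dl = m.
Proof.
move=> lp; apply/eqP; rewrite eqn_leq rank_leq_row /=.
by rewrite -{1}(mxrank1 F m) -(DlPmT (Ordinal lp)) mxrankM_maxl.
Qed.

Lemma row_free_Dl : (0 < l)%N -> row_free Dl.
Proof. by move=> lp; rewrite /row_free rank_Dl. Qed.

Lemma rank_Bsum V A : \rank (Bsum V A) = (\sum_i \rank (Xm V (A i)))%N.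
Proof.
have dx : mxdirect (Bsum V A).
  apply/mxdirect_sumsP => i _; apply/eqP; rewrite -submx0.
  set Z := (_ :&: _)%MS.
  have [_ Z0] := @memB_l (fun j => predT j && (j != i)) _ (fun j => Xm V (A j)) _ Z (capmxSr _ _) i.
  have [D ZD] : exists D, Z = D *m (Xm V (A i) *m Pm i).
    by apply/submxP; rewrite -(genmxE (Xm V (A i) *m Pm i)); exact: capmxSl.
  have -> : Z = Z *m (Pm i)^T *m Pm i.
    by rewrite ZD !mulmxA -(mulmxA _ (Pm i)) PmPmT eqxx mulmx1.
  by rewrite Z0 ?eqxx // mul0mx sub0mx.
rewrite (mxdirectP dx) /=; apply: eq_bigr => i _.
by rewrite mxrank_gen mxrankMfree // row_free_Pm.
Qed.

Lemma cap_DB V A : (0 < l)%N -> \rank (Dl :&: Bsum V A)%MS = dim_cap A V.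
Proof.
move=> lp; rewrite /dim_cap.
set C := (\bigcap_(i < l) colspan (A i) V)%MS.
rewrite -(mxrankMfree C (row_free_Dl lp)).
apply/eqmx_rank/andP; split.
  set Z := (_ :&: _)%MS.
  have [u Zu] : exists u, Z = u *m Dl by apply/submxP; apply: capmxSl.
  have Hi := @memB_l xpredT _ (fun j => Xm V (A j)) _ Z (capmxSr _ _).
  rewrite Zu submxMr //; apply/sub_bigcapmxP => i _.
  have := (Hi i).1; rewrite Zu -mulmxA DlPmT mulmx1.
  by rewrite /colspan genmxE.
rewrite sub_capmx submxMl /=; apply: memB_r => // i _.
rewrite -mulmxA DlPmT mulmx1 /C.
by apply: (bigcapmx_inf i) => //; rewrite /colspan genmxE.
Qed.

Lemma T1 V A : (0 < l)%N ->
  (\rank (Dl + Bsum V A)%MS + dim_cap A V = m + \sum_i \rank (Xm V (A i)))%N.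
Proof.
by move=> lp; rewrite -cap_DB // mxrank_sum_cap rank_Dl // rank_Bsum.
Qed.

Lemma full_char (V : 'M[F]_(m, n)) (A : 'I_l -> {set 'I_n}) : (0 < l)%N ->
  full_col_rank (Gblock A V) =
  (dim_cap A V == 0%N) && [forall i, \rank (Xm V (A i)) == #|A i|].
Proof.
move=> lp; rewrite /full_col_rank rank_Gblock.
have Hle : (\sum_i \rank (Xm V (A i)) <= \sum_i #|A i| ?= iff
             [forall i, \rank (Xm V (A i)) == #|A i|])%N.
  by apply: leqif_sum => i _; apply/leqif_eq/rank_leq_row.
rewrite -Hle.2; have H1 := Hle.1; have E := T1 V A lp.
move: H1 E; set a := (\sum_i _)%N; set b := (\sum_i _)%N.
set R := \rank _; set d := dim_cap _ _ => H1 E.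
apply/idP/idP => [/eqP H|/andP[/eqP H2 /eqP H3]].
  by apply/andP; split; apply/eqP; lia.
by apply/eqP; lia.
Qed.

Lemma rowsub_eqmx p q r (f : 'I_p -> 'I_q) (M : 'M[F]_(q, r)) :
  (rowsub f M :=: \sum_t <<row (f t) M>>)%MS.
Proof.
apply/eqmxP/andP; split.
  apply/row_subP => t; rewrite row_rowsub.
  by apply: (sumsmx_sup t) => //; rewrite genmxE.
apply/sumsmx_subP => t _; rewrite genmxE -row_rowsub; exact: row_sub.
Qed.

Lemma Xm_eqmx (V : 'M[F]_(m, n)) S : (Xm V S :=: \sum_(j in S) <<row j V^T>>)%MS.
Proof.
rewrite /Xm /colsub_set trmx_mxsub (big_enum_val (fun j => <<row j V^T>>%MS)).
exact: rowsub_eqmx.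
Qed.

Definition wv (V : 'M[F]_(m, n)) (p : 'I_l * 'I_n) := row p.2 V^T *m Pm p.1.

Lemma Bsum_pairs (V : 'M[F]_(m, n)) A :
  (Bsum V A :=: \sum_(p | p.2 \in A p.1) <<wv V p>>)%MS.
Proof.
rewrite /Bsum.
apply: eqmx_trans (eqmx_sums (P := xpredT)
   (B := fun i => (\sum_(j | j \in A i) <<row j V^T *m Pm i>>)%MS) _) _.
  move=> i _; apply: eqmx_trans (genmxE _) _.
  apply: eqmx_trans (eqmxMr _ (Xm_eqmx V (A i))) _.
  apply: eqmx_trans (sumsmxMr_gen _ _ _) _.
  apply: eqmx_sums => j _; apply/eqmxP; rewrite !genmxE; apply/eqmxP.
  exact: eqmxMr (genmxE _).
by rewrite pair_big_dep.
Qed.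
End Lin.

Section Greedy.
Variable F : fieldType.

Lemma add_row_rank N r (Y : 'M[F]_(r, N)) (v : 'rV_N) :
  ~~ (v <= Y)%MS -> \rank (<<v>> + Y)%MS = (\rank Y).+1.
Proof.
move=> nvY; have := mxrank_sum_cap <<v>>%MS Y.
have v0 : v != 0 by apply: contraNneq nvY => ->; exact: sub0mx.
rewrite mxrank_gen rank_rV v0.
have -> : \rank (<<v>> :&: Y)%MS = 0%N.
  apply/eqP; apply: contraNT nvY => ne0.
  have le : (<<v>> :&: Y <= <<v>>)%MS := capmxSl _ _.
  have [_ E] := mxrank_leqif_sup le.
  have r1 : \rank <<v>>%MS = 1%N by rewrite mxrank_gen rank_rV v0.
  have r2 := mxrankS le; rewrite r1 in r2.
  have : \rank (<<v>> :&: Y)%MS == \rank <<v>>%MS by rewrite r1; lia.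
  rewrite E => sv; apply: submx_trans (capmxSr <<v>>%MS Y).
  by apply: submx_trans sv; rewrite genmxE.
by move=> H; lia.
Qed.

Variables (I : finType) (N : nat) (U : 'M[F]_N) (w : I -> 'rV[F]_N).
Let S (Q : {set I}) := (\sum_(p in Q) <<w p>>)%MS.

Lemma mem_US p (Q : {set I}) : p \in Q -> (w p <= U + S Q)%MS.
Proof.
move=> pQ; apply: submx_trans (addsmxSr U _).
by apply: (sumsmx_sup p) => //; rewrite genmxE.
Qed.

Lemma sub_US (Q : {set I}) r (Z : 'M[F]_(r, N)) : (forall p, p \in Q -> (w p <= Z)%MS) -> (U <= Z)%MS -> (U + S Q <= Z)%MS.
Proof.
move=> H HU; rewrite addsmx_sub HU /=; apply/sumsmx_subP => p pQ.
by rewrite genmxE H.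
Qed.

Lemma greedy (Q : {set I}) : exists Q' : {set I}, [/\ Q' \subset Q,
   \rank (U + S Q')%MS = (\rank U + #|Q'|)%N & (U + S Q == U + S Q')%MS].
Proof.
have [k] := ubnP #|Q|; elim: k Q => // k IH Q.
case: (set_0Vmem Q) => [->|[q qQ]] szQ.
  exists set0; rewrite sub0set cards0 addn0 /S big_set0 addsmx0; split => //.
  by rewrite submx_refl.
have szQ0 : (#|Q :\ q| < k)%N by move: szQ; rewrite (cardsD1 q Q) qQ.
have [Q0' [sub0 rk0 eq0]] := IH _ szQ0.
have sQ0Q : Q0' \subset Q by apply: subset_trans sub0 (subsetDl _ _).
have mem1 p : p \in Q :\ q -> (w p <= U + S Q0')%MS.
  by move=> pQ; apply: submx_trans (mem_US pQ) _; case/andP: eq0.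
case: (boolP (w q <= U + S Q0')%MS) => wq.
  exists Q0'; split => //; apply/andP; split.
    apply: sub_US; last exact: addsmxSl.
    move=> p pQ; case: (eqVneq p q) => [->//|ne]; apply: mem1.
    by rewrite in_setD1 ne.
  by apply: sub_US => [p /(subsetP sQ0Q)/mem_US //|]; exact: addsmxSl.
have qn : q \notin Q0'.
  by apply: contra (subsetP sub0 q) _; rewrite in_setD1 eqxx.
exists (q |: Q0'); split.
- by rewrite subUset sub1set qQ sQ0Q.
- rewrite /S big_setU1 //= addsmxA (addsmxC U) -addsmxA add_row_rank //.
  by rewrite rk0 cardsU1 qn; lia.
- apply/andP; split.
    apply: sub_US; last exact: addsmxSl.
    move=> p pQ; case: (eqVneq p q) => [->|ne]; first by apply: mem_US; rewrite setU11.
    apply: submx_trans (mem1 p _) _; first by rewrite in_setD1 ne.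
    by apply: addsmxS => //; rewrite /S big_setU1 //=; exact: addsmxSr.
  apply: sub_US; last exact: addsmxSl.
  move=> p; rewrite in_setU1 => /orP[/eqP->|pQ]; first exact: mem_US.
  by apply: mem_US; apply: (subsetP sQ0Q).
Qed.

End Greedy.

Lemma minor_exists (K : fieldType) p q (N : 'M[K]_(p, q)) :
  exists f : 'I_(\rank N) -> 'I_p, exists g : 'I_(\rank N) -> 'I_q,
    \det (mxsub f g N) != 0.
Proof.
set f := maxrankfun N; set N1 := rowsub f N.
have fr : row_free N1 := maxrowsub_free N.
have e : \rank N1^T = \rank N by rewrite mxrank_tr; exact/eqP.
have : exists g : 'I_(\rank N1^T) -> 'I_q, row_free (rowsub g N1^T).
  by exists (maxrankfun N1^T); exact: maxrowsub_free.
rewrite e => -[g fg]; exists f, g.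
have -> : mxsub f g N = (rowsub g N1^T)^T by apply/matrixP => i j; rewrite !mxE.
by rewrite det_tr -unitfE -unitmxE -row_free_unit.
Qed.

Lemma semicont (R : idomainType) (K : fieldType) (phi : {rmorphism R -> K}) p q
  (M : 'M[R]_(p, q)) :
  (\rank (map_mx phi M) <= \rank (map_mx (@tofrac R) M))%N.
Proof.
have [f [g dn]] := minor_exists (map_mx phi M).
rewrite -map_mxsub det_map_mx in dn.
have : \det (mxsub f g (map_mx (@tofrac R) M)) != 0.
  rewrite -map_mxsub det_map_mx tofrac_eq0; apply: contraNneq dn => ->.
  by rewrite rmorph0.
rewrite -unitfE -unitmxE => /mxrank_unit E.
rewrite -{1}E mxsubrc rowsubE.
apply: leq_trans (mxrankM_maxr _ _) _.
rewrite -mxrank_tr trmx_mxsub -[X in (_ <= X)%N]mxrank_tr.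
by rewrite rowsubE; apply: mxrankM_maxr.
Qed.

Definition GbR (R : pzRingType) (m n l : nat) (A : 'I_l -> {set 'I_n})
  (V : 'M[R]_(m, n)) :=
  row_mx (\mxcol_(i < l) (1%:M : 'M[R]_m))
         (\mxblock_(i < l, j < l)
            (if i == j then colsub_set (A j) V else 0 : 'M[R]_(m, #|A j|))).

Lemma Gblock_map (R : pzRingType) (K : fieldType) (phi : {rmorphism R -> K}) m n l
  (A : 'I_l -> {set 'I_n}) (M : 'M[R]_(m, n)) :
  Gblock A (map_mx phi M) = map_mx phi (GbR A M).
Proof.
rewrite /Gblock /GbR map_row_mx; congr row_mx; apply/matrixP => i j; rewrite !mxE.
  by case: eqP => _; rewrite ?rmorph1 ?rmorph0 ?mulr1n ?mulr0n ?rmorph_nat.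
by case: eqP => e; rewrite !mxE ?rmorph0.
Qed.

Definition M0 (F : fieldType) m n : 'M[{mpoly F[m * n]}]_(m, n) :=
  \matrix_(i < m, j < n) 'X_(mxvec_index i j).

Lemma generic_map (F : fieldType) m n : generic F m n = map_mx (@tofrac _) (M0 F m n).
Proof. by apply/matrixP => i j; rewrite !mxE. Qed.

Lemma eval_map (F : fieldType) m n (V : 'M[F]_(m, n)) :
  V = map_mx (meval (fun k => mxvec V 0 k)) (M0 F m n).
Proof. by apply/matrixP => i j; rewrite !mxE mevalXU mxvecE. Qed.

Lemma semiG (F : fieldType) (K : fieldType) m n l (phi : {rmorphism {mpoly F[m * n]} -> K})
  (A : 'I_l -> {set 'I_n}) :
  (\rank (Gblock A (map_mx phi (M0 F m n))) <= \rank (Gblock A (generic F m n)))%N.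
Proof.
rewrite generic_map !Gblock_map; exact: semicont.
Qed.



Lemma superset_card (I : finType) (T : {set I}) c :
  (#|T| <= c <= #|I|)%N -> exists2 S : {set I}, T \subset S & #|S| = c.
Proof.
have [k] := ubnP (c - #|T|); elim: k T => // k IH T szk /andP[Tc cI].
case: (eqVneq #|T| c) => [<-|ne]; first by exists T.
have : (0 < #|~: T|)%N by have := cardsC T; lia.
rewrite card_gt0 => /set0Pn [x]; rewrite in_setC => xT.
have [||S sub cS] := IH (x |: T).
- by rewrite cardsU1 xT; lia.
- by rewrite cardsU1 xT; apply/andP; split; lia.
by exists S => //; apply: subset_trans sub; exact: subsetUr.
Qed.

Section Rk.
Variable K : fieldType.

Lemma rank_sum_le (I : finType) N (T : {set I}) (v : I -> 'rV[K]_N) :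
  (\rank (\sum_(j in T) <<v j>>)%MS <= #|T|)%N.
Proof.
rewrite -sum1_card; elim/big_ind2: _ => //.
- by rewrite mxrank0.
- move=> A a B b HA HB; apply: leq_trans (mxrank_adds_leqif A B).1 _; exact: leq_add.
- by move=> j _; rewrite mxrank_gen rank_rV; case: (_ != 0).
Qed.

Variables (m n : nat).

Lemma rankXm_sum (V : 'M[K]_(m, n)) S :
  \rank (Xm V S) = \rank (\sum_(j in S) <<row j V^T>>)%MS.
Proof. by rewrite (Xm_eqmx V S). Qed.

Lemma SubIndep (V : 'M[K]_(m, n)) (T S : {set 'I_n}) :
  T \subset S -> \rank (Xm V S) = #|S| -> \rank (Xm V T) = #|T|.
Proof.
move=> sTS; rewrite !rankXm_sum (big_setID T) /= (setIidPr sTS).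
pose D := (S :\: T); rewrite -/D => E.
apply/eqP; rewrite eqn_leq rank_sum_le /=.
have := (mxrank_adds_leqif (\sum_(j in T) <<row j V^T>>)%MS
                           (\sum_(j in D) <<row j V^T>>)%MS).1.
have := rank_sum_le D (fun j => row j V^T).
rewrite E /D cardsD (setIidPr sTS) => H1 H2.
have := subset_leq_card sTS; move=> H3; rewrite -(leq_add2r (#|S| - #|T|)) subnKC //; apply: (leq_trans H2); rewrite leq_add2l; exact: H1.
Qed.

Lemma dim_cap_const l (V : 'M[K]_(m, n)) S : (0 < l)%N ->
  dim_cap (fun _ : 'I_l => S) V = \rank (Xm V S).
Proof.
move=> lp; rewrite /dim_cap -(mxrank_gen (Xm V S)).
apply/eqmx_rank/andP; split.
  by apply: (bigcapmx_inf (Ordinal lp)) => //.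
by apply/sub_bigcapmxP.
Qed.

Lemma dim_cap2 (V : 'M[K]_(m, n)) (B : 'I_2 -> {set 'I_n}) :
  dim_cap B V = \rank (colspan (B ord0) V :&: colspan (B (lift ord0 ord0)) V)%MS.
Proof.
rewrite /dim_cap !big_ord_recl big_ord0.
by apply/eqmx_rank; rewrite capmxA capmx1 submx_refl.
Qed.

End Rk.

Lemma Xm_map (R : pzRingType) (K : fieldType) (phi : {rmorphism R -> K}) m n
  (M : 'M[R]_(m, n)) S :
  Xm (map_mx phi M) S = map_mx phi (colsub_set S M)^T.
Proof. by apply/matrixP => i j; rewrite !mxE. Qed.

Lemma semiX (F K : fieldType) m n (phi : {rmorphism {mpoly F[m * n]} -> K}) S :
  (\rank (Xm (map_mx phi (M0 F m n)) S) <= \rank (Xm (generic F m n) S))%N.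
Proof. by rewrite generic_map !Xm_map; exact: semicont. Qed.

Lemma T4 (F : fieldType) m n (S : {set 'I_n}) :
  (#|S| <= m)%N -> \rank (Xm (generic F m n) S) = #|S|.
Proof.
move=> Sm; apply/eqP; rewrite eqn_leq rank_leq_row /=.
pose E : 'M[F]_(m, n) :=
  \matrix_(i, j) ((j \in S) && (i == index j (enum S) :> nat))%:R.
have EP : Xm E S = pid_mx #|S|.
  apply/matrixP => t i; rewrite /Xm /colsub_set !mxE.
  rewrite enum_valP /= ltn_ord andbT eq_sym; congr ((_ == _)%:R).
  by rewrite /enum_val index_uniq ?enum_uniq // -cardE ltn_ord.
have H := semiX (meval (fun k => mxvec E 0 k)) S.
rewrite -eval_map EP rank_pid_mx in H => //.
Qed.


Lemma colsub_mull (R : pzRingType) p q r s (g : 'I_s -> 'I_r) (A : 'M[R]_(p, q)) (B : 'M[R]_(q, r)) :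
  colsub g (A *m B) = A *m colsub g B.
Proof. by apply/matrixP => i j; rewrite !mxE; apply: eq_bigr => k _; rewrite !mxE. Qed.

Lemma semiZ (F : fieldType) n m m' l (A : 'I_l -> {set 'I_n}) :
  (m' <= m)%N -> (0 < l)%N ->
  full_col_rank (Gblock A (generic F m' n)) -> full_col_rank (Gblock A (generic F m n)).
Proof.
move=> le lp.
set W' := generic F m' n.
pose Z : 'M[genfield F m' n]_(m, n) := (pid_mx m' : 'M_(m, m')) *m W'.
pose phi := mmap (@tofrac _ \o @mpolyC (m' * n) F) (fun t => mxvec Z 0 t).
have ZE : Z = map_mx phi (M0 F m n).
  by apply/matrixP => i j; rewrite [in RHS]mxE [in RHS]mxE /phi mmapX mmap1U mxvecE.
have rk := semiG phi A; rewrite -ZE -/W' in rk.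
move=> H.
suff HZ : full_col_rank (Gblock A Z).
  rewrite /full_col_rank eqn_leq rank_leq_col /=; move: HZ; rewrite /full_col_rank => /eqP E.
  by rewrite -{1}E.
pose P : 'M[genfield F m' n]_(m', m) := pid_mx m'.
have XmZ S : Xm Z S = Xm W' S *m P.
  by rewrite /Xm /colsub_set colsub_mull trmx_mul tr_pid_mx.
have PP : P *m P^T = 1%:M.
  by rewrite tr_pid_mx mul_pid_mx minnn (minn_idPr le) pid_mx_1.
have Pf : row_free P by rewrite /row_free rank_pid_mx.
rewrite (full_char _ _ lp) in H; rewrite (full_char _ _ lp); case/andP: H => /eqP d0 /forallP rk'.
apply/andP; split; last by apply/forallP => i; rewrite XmZ mxrankMfree.
rewrite /dim_cap mxrank_eq0 -submx0.
set Y := (\bigcap_(i < l) _)%MS.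
have hY i : (Y <= Xm W' (A i) *m P)%MS.
  by rewrite -XmZ; apply: (bigcapmx_inf i) => //; rewrite /colspan genmxE.
have YPi i : (Y *m P^T <= Xm W' (A i))%MS.
  by have [D ->] := submxP (hY i); rewrite -!mulmxA PP mulmx1 submxMl.
have YP : Y = Y *m P^T *m P.
  by have [D ->] := submxP (hY (Ordinal lp)); rewrite -!mulmxA (mulmxA P) PP mul1mx.
have : (Y *m P^T <= \bigcap_(i < l) colspan (A i) W')%MS.
  by apply/sub_bigcapmxP => i _; rewrite /colspan genmxE YPi.
move: d0; rewrite /dim_cap => /eqP; rewrite mxrank_eq0 => /eqP ->.
by rewrite submx0 => /eqP Y0; rewrite YP Y0 mul0mx.
Qed.


Lemma fam_eq (K : fieldType) m n l l' (V : 'M[K]_(m, n))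
  (A : 'I_l -> {set 'I_n}) (B : 'I_l' -> {set 'I_n}) :
  (0 < l)%N -> (0 < l')%N ->
  (forall i, exists j, A i = B j) -> (forall j, exists i, B j = A i) ->
  full_col_rank (Gblock A V) = full_col_rank (Gblock B V).
Proof.
move=> lp lp' HA HB; rewrite !full_char //; congr andb.
  have -> // : dim_cap A V = dim_cap B V.
  apply/eqmx_rank/andP; split; apply/sub_bigcapmxP => i _.
    by have [j ->] := HB i; apply: (bigcapmx_inf j).
  by have [j ->] := HA i; apply: (bigcapmx_inf j).
apply/forallP/forallP => H i.
  by have [j ->] := HB i; apply: H.
by have [j ->] := HA i; apply: H.
Qed.

Lemma partc (F : fieldType) n k (G : 'M[F]_(k, n)) d l l' :
  rMDS d l G -> (2 <= l' < l)%N -> rMDS d l' G.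
Proof.
move=> H /andP[l2 ll] B HB.
have lp' : (0 < l')%N by lia.
have lp : (0 < l)%N by lia.
pose j0 : 'I_l' := Ordinal lp'.
pose A (i : 'I_l) := B (insubd j0 (val i)).
have E (K : fieldType) m (V : 'M[K]_(m, n)) :
    full_col_rank (Gblock A V) = full_col_rank (Gblock B V).
  apply: fam_eq => //; first by move=> i; exists (insubd j0 (val i)).
  move=> j; exists (widen_ord (ltnW ll) j); rewrite /A; congr B.
  by apply: val_inj; rewrite val_insubd /= ltn_ord.
by rewrite -E; apply: H; rewrite E.
Qed.

Lemma partb (F : fieldType) n k (G : 'M[F]_(k, n)) d l :
  (2 <= l)%N -> rMDS d l G -> forall d', (d < d' <= k)%N -> rMDS d' l G.
Proof.
move=> l2 H d' /andP[dd dk] B HB; apply: H.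
apply: (semiZ (m' := k - d')) => //; last by apply: leq_trans l2.
by apply: leq_sub2l; apply: ltnW.
Qed.

Lemma parta1 (F : fieldType) n k (G : 'M[F]_(k, n)) l :
  (2 <= l)%N -> MDS l G -> rMDS 0 l G.
Proof.
move=> l2 H; have lp : (0 < l)%N by apply: leq_trans l2.
rewrite /rMDS subn0 => A HA.
rewrite (full_char _ _ lp) in HA; rewrite (full_char _ _ lp).
rewrite H; case/andP: HA => -> /forallP HA /=; apply/forallP => i.
by rewrite -(dim_cap_const _ _ lp) H dim_cap_const.
Qed.

Lemma rank_set0 (K : fieldType) m n (V : 'M[K]_(m, n)) : \rank (Xm V set0) = 0%N.
Proof.
apply/eqP; rewrite -leqn0; apply: leq_trans (rank_leq_row (Xm V set0)) _.
by rewrite cards0.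
Qed.

Lemma rank_single (K : fieldType) m n l (V : 'M[K]_(m, n)) (i0 i1 : 'I_l) S :
  i0 != i1 ->
  \rank (Gblock (fun i => if i == i0 then S else set0) V) = (m + \rank (Xm V S))%N.
Proof.
move=> ne; have lp := leq_ltn_trans (leq0n i0) (ltn_ord i0).
set B := (fun i : 'I_l => if i == i0 then S else set0).
have := T1 V B lp; rewrite -rank_Gblock.
have -> : dim_cap B V = 0%N.
  apply/eqP; rewrite -leqn0.
  have : (\bigcap_(i < l) colspan (B i) V <= colspan (B i1) V)%MS.
    by apply: (bigcapmx_inf i1).
  move/mxrankS; rewrite /colspan mxrank_gen /B eq_sym (negPf ne).
  by rewrite -/(Xm V set0) rank_set0.
have -> : (\sum_i \rank (Xm V (B i)) = \rank (Xm V S))%N.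
  rewrite (bigD1 i0) //= big1 => [|i /negPf]; last by rewrite /B => ->; rewrite rank_set0.
  by rewrite /B eqxx addn0.
by rewrite addn0.
Qed.

Lemma SPg (K : fieldType) m n l (V : 'M[K]_(m, n)) (B : 'I_l -> {set 'I_n}) :
  (Dl K m l + Bsum V B :=: <<Dl K m l>> + \sum_(p | p.2 \in B p.1) <<wv V p>>)%MS.
Proof.
apply: adds_eqmx; first exact: eqmx_sym (genmxE _).
exact: Bsum_pairs.
Qed.

Lemma parta2 (F : fieldType) n k (G : 'M[F]_(k, n)) l :
  (2 <= l)%N -> rMDS 0 l G -> MDS l G.
Proof.
move=> l2 H; have lp : (0 < l)%N by lia.
rewrite /rMDS subn0 in H.
set W := generic F k n.
have hrank (B : 'I_l -> {set 'I_n}) : \rank (Gblock B G) = \rank (Gblock B W).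
  apply/eqP; rewrite eqn_leq; apply/andP; split.
    by have := semiG (meval (fun t => mxvec G 0 t)) B; rewrite -eval_map.
  rewrite !rank_Gblock (SPg W B) (SPg G B).
  pose Q := [set p : 'I_l * 'I_n | p.2 \in B p.1].
  have QE V : (\sum_(p | p.2 \in B p.1) <<wv V p>> = \sum_(p in Q) <<wv V p>>)%MS.
    by apply: eq_bigl => p; rewrite inE.
  rewrite !QE.
  have [Q' [sQ rkQ eqQ]] := greedy <<Dl (genfield F k n) k l>>%MS (wv W) Q.
  rewrite mxrank_gen (rank_Dl _ _ lp) in rkQ.
  have -> : \rank (<<Dl (genfield F k n) k l>> + \sum_(p in Q) <<wv W p>>)%MS =
            \rank (<<Dl (genfield F k n) k l>> + \sum_(p in Q') <<wv W p>>)%MS.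
    by apply/eqmx_rank.
  rewrite rkQ.
  pose B' i := [set j | (i, j) \in Q'].
  have Q'E V : (\sum_(p in Q') <<wv V p>> = \sum_(p | p.2 \in B' p.1) <<wv V p>>)%MS.
    by apply: eq_bigl => -[i j]; rewrite inE.
  have card : #|Q'| = (\sum_i #|B' i|)%N.
    rewrite -sum1_card (eq_bigl (fun p => xpredT p.1 && (p.2 \in B' p.1))); last first.
      by move=> -[i j]; rewrite inE.
    rewrite -(pair_big_dep xpredT (fun i j => j \in B' i) (fun _ _ => 1%N)) /=.
    by apply: eq_bigr => i _; rewrite sum1_card.
  have fullW : full_col_rank (Gblock B' W).
    by rewrite /full_col_rank rank_Gblock (SPg W B') -Q'E rkQ card.
  have := H B' fullW; rewrite /full_col_rank rank_Gblock (SPg G B') -Q'E -card => /eqP <-.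
  apply: mxrankS; apply: addsmxS => //; apply/sumsmx_subP => p pQ'.
  by apply: (sumsmx_sup p) => //; apply: (subsetP sQ).
have hX S : \rank (Xm G S) = \rank (Xm W S).
  pose i0 : 'I_l := Ordinal lp; pose i1 : 'I_l := Ordinal l2.
  have ne : i0 != i1 by [].
  have := hrank (fun i => if i == i0 then S else set0).
  by rewrite !(rank_single _ _ ne) => /eqP; rewrite eqn_add2l => /eqP.
move=> A; have E1 := T1 G A lp; have E2 := T1 W A lp.
rewrite -!rank_Gblock hrank in E1; rewrite -rank_Gblock in E2.
rewrite (eq_bigr _ (fun i _ => hX (A i))) in E1.
move: E1 E2; set a := \rank _; set b := (\sum_i _)%N; move=> E1 E2; rewrite -/W; lia.
Qed.

Lemma union_eqmx (K : fieldType) m n (V : 'M[K]_(m, n)) (T1 T2 : {set 'I_n}) :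
  (colspan T1 V + colspan T2 V :=: \sum_(j in T1 :|: T2) <<row j V^T>>)%MS.
Proof.
have CE T : (colspan T V :=: \sum_(j in T) <<row j V^T>>)%MS.
  by apply: eqmx_trans (genmxE _) _; exact: Xm_eqmx.
apply/eqmxP/andP; split.
  rewrite addsmx_sub (CE T1) (CE T2); apply/andP; split; apply/sumsmx_subP => j jT;
    by apply: (sumsmx_sup j) => //; rewrite in_setU jT ?orbT.
apply/sumsmx_subP => j; rewrite in_setU => /orP[jT|jT].
  by apply: submx_trans (addsmxSl _ _); rewrite (CE T1); apply: (sumsmx_sup j).
by apply: submx_trans (addsmxSr _ _); rewrite (CE T2); apply: (sumsmx_sup j).
Qed.

Lemma i01 (i : 'I_2) : i = ord0 \/ i = lift ord0 ord0.
Proof. by case: i => [[|[|j]]] Hi; [left|right|]; try apply: val_inj. Qed.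

Lemma partd (F : fieldType) n k (G : 'M[F]_(k, n)) d :
  row_free G -> (d <= k)%N ->
  (rMDS d 2 G <->
   forall S : {set 'I_n}, #|S| = (k - d)%N -> row_free (colsub_set S G)^T).
Proof.
move=> rfG dk; set m := (k - d)%N.
have lp2 : (0 < 2)%N by [].
have ne : (ord0 : 'I_2) != lift ord0 ord0 by [].
split.
  move=> H S hS.
  pose B := fun i : 'I_2 => if i == ord0 then S else set0.
  have cols : (\sum_(i < 2) #|B i| = #|S|)%N.
    by rewrite !big_ord_recl big_ord0 /B /= cards0 !addn0.
  have fullW : full_col_rank (Gblock B (generic F m n)).
    by rewrite /full_col_rank (rank_single _ _ ne) T4 ?cols // hS.
  have := H B fullW; rewrite /full_col_rank (rank_single _ _ ne) cols eqn_add2l.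
  by [].
move=> H B HB.
rewrite (full_char _ _ lp2) in HB; rewrite (full_char _ _ lp2).
case/andP: HB => /eqP d0 /forallP rW.
set W := generic F m n.
set B0 := B ord0; set B1 := B (lift ord0 ord0).
have rC V i : \rank (colspan (B i) V) = \rank (Xm V (B i)) by rewrite mxrank_gen.
have capW : \rank (colspan B0 W :&: colspan B1 W)%MS = 0%N by rewrite -dim_cap2.
have rW0 : \rank (colspan B0 W) = #|B0| by rewrite mxrank_gen; apply/eqP; exact: rW.
have rW1 : \rank (colspan B1 W) = #|B1| by rewrite mxrank_gen; apply/eqP; exact: rW.
have sc := mxrank_sum_cap (colspan B0 W) (colspan B1 W).
rewrite capW rW0 rW1 addn0 in sc.
have U : (#|B0| + #|B1| <= #|B0 :|: B1|)%N.
  by rewrite -sc (union_eqmx W B0 B1) rank_sum_le.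
have Um : (#|B0| + #|B1| <= m)%N by rewrite -sc; exact: rank_leq_row.
have cU : #|B0 :|: B1| = (#|B0| + #|B1|)%N.
  by have := cardsU B0 B1; lia.
have kn : (k <= n)%N by move/eqP: rfG => <-; exact: rank_leq_col.
have [S sS cS] : exists2 S : {set 'I_n}, B0 :|: B1 \subset S & #|S| = m.
  by apply: superset_card; rewrite card_ord cU Um /m; lia.
have rS : \rank (Xm G S) = #|S| by apply/eqP; apply: H.
have rU := SubIndep sS rS.
have rG i : \rank (Xm G (B i)) = #|B i|.
  apply: SubIndep rS; apply: subset_trans sS.
  by case: (i01 i) => ->; [exact: subsetUl | exact: subsetUr].
apply/andP; split; last by apply/forallP => i; rewrite rG.
rewrite dim_cap2; have scG := mxrank_sum_cap (colspan B0 G) (colspan B1 G).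
rewrite !mxrank_gen (rG ord0) (rG (lift ord0 ord0)) (union_eqmx G B0 B1) in scG.
rewrite -rankXm_sum rU cU in scG.
rewrite -/B0 -/B1 in scG *; apply/eqP; lia.
Qed.

End Aux.
Import Aux.

Theorem proposition3p3 (F : fieldType) (n k : nat) (G : 'M[F]_(k, n)) (l : nat) :
  row_free G -> (2 <= l)%N ->
  (rMDS 0 l G <-> MDS l G) /\
  (forall d, (d <= k)%N -> rMDS d l G ->
     forall d', (d < d' <= k)%N -> rMDS d' l G) /\
  (forall d, (d <= k)%N -> rMDS d l G ->
     forall l', (2 <= l' < l)%N -> rMDS d l' G) /\
  (forall d, (d <= k)%N ->
     (rMDS d 2 G <->
      forall S : {set 'I_n}, #|S| = (k - d)%N -> row_free (colsub_set S G)^T)).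
Proof.
move=> rf l2; split; first by split; [exact: parta2 | exact: parta1].
split; first by move=> d _ H; exact: partb l2 H.
split; first by move=> d _ H l'; exact: partc H.
by move=> d dk; exact: partd.
Qed.
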